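(* For every $f\in\mathcal{F}_3$ and every $\mathbf{x}\in[0,1]^3$, letting $k\in\{1,2,3\}$ be the unique index with $f\in\mathcal{S}_3^k$, $$f^{+}(\mathbf{x})=\min\Big(\min_{i\in\{4k-2,4k-1,4k,4k+1\}}\Big(\lambda_{i0}+\sum_{j=1}^3\lambda_{ij}x_j\Big),\ \min_{\ell\in\{1,14\}}\Big(\lambda_{\ell0}+\sum_{j=1}^3\lambda_{\ell j}x_j\Big)\Big),$$ where the vectors $\boldsymbol\lambda_i=(\lambda_{i0},\lambda_{i1},\lambda_{i2},\lambda_{i3})$ are: $\boldsymbol\lambda_1=(0,f(1),f(2),f(3))$; $\boldsymbol\lambda_2=(f(2)-f(2|3),\,f(1)-f(2)+f(2|3),\,f(2|3),\,f(3|2))$; $\boldsymbol\lambda_3=(f(1)-f(1|3),\,f(1|3),\,f(2|3),\,f(3|1))$; $\boldsymbol\lambda_4=(f(2)-f(2|1),\,f(1|2),\,f(2|1),\,f(3|2))$; $\boldsymbol\lambda_5=(f(2,3)-f(3|1)-f(2|1),\,f(2|1)+f(1,3)-f(2,3),\,f(2|1),\,f(3|1))$; $\boldsymbol\lambda_6=(f(1)-f(1|3),\,f(1|3),\,f(2)-f(1)+f(1|3),\,f(3|1))$; $\boldsymbol\lambda_7=(f(2)-f(2|3),\,f(1|3),\,f(2|3),\,f(3|2))$; $\boldsymbol\lambda_8=(f(2)-f(2|1),\,f(1|2),\,f(2|1),\,f(3|1))$; $\boldsymbol\lambda_9=(f(1,3)-f(1|2)-f(3|2),\,f(1|2),\,f(1|2)+f(2,3)-f(1,3),\,f(3|2))$;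 $\boldsymbol\lambda_{10}=(f(1)-f(1|2),\,f(1|2),\,f(2|1),\,f(3)-f(2)+f(2|1))$; $\boldsymbol\lambda_{11}=(f(2)-f(2|3),\,f(1|2),\,f(2|3),\,f(3|2))$; $\boldsymbol\lambda_{12}=(f(3)-f(3|1),\,f(1|3),\,f(2|1),\,f(3|1))$; $\boldsymbol\lambda_{13}=(f(1,2)-f(1|3)-f(2|3),\,f(1|3),\,f(2|3),\,f(2|3)+f(1,3)-f(1,2))$; $\boldsymbol\lambda_{14}=(f(1,2)+f(1,3)+f(2,3)-2,\,1-f(2,3),\,1-f(1,3),\,1-f(1,2))$.
   Context: $[n]=\{1,\dots,n\}$. A set function $f:2^{[n]}\to\mathbb{R}_+$ is monotone if $f(S)\le f(T)$ for $S\subseteq T$, submodular if $f(S)+f(T)\ge f(S\cap T)+f(S\cup T)$. $\mathcal{F}_n$ is the set of monotone submodular $f:2^{[n]}\to\mathbb{R}_+$ with $f(\emptyset)=0$, $f([n])=1$. Write $f(i)=f(\{i\})$, $f(i,j)=f(\{i,j\})$, $f(i|j)=f(\{i,j\})-f(\{j\})$. Define $\mathcal{F}_3^1=\{f\in\mathcal{F}_3: f(3|2)\ge f(3|1),\ f(2|3)\ge f(2|1)\}$, $\mathcal{F}_3^2=\{f\in\mathcal{F}_3: f(3|1)\ge f(3|2),\ f(1|3)\ge f(1|2)\}$, $\mathcal{F}_3^3=\{f\in\mathcal{F}_3: f(2|1)\ge f(2|3),\ f(1|2)\ge f(1|3)\}$, and $\mathcal{S}_3^k=\mathcal{F}_3^k\setminus\bigcup_{j<k}\mathcal{F}_3^j$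 for $k=1,2,3$ (these partition $\mathcal{F}_3$). For $\mathbf{x}\in[0,1]^n$, the concave closure is $f^{+}(\mathbf{x})=\max\sum_{S\subseteq[n]}\theta(S)f(S)$ over $\theta:2^{[n]}\to\mathbb{R}_{\ge0}$ with $\sum_S\theta(S)=1$ and $\sum_{S\ni i}\theta(S)=x_i$ for all $i\in[n]$. *)

(* Defs.v *)
From mathcomp Require Import all_boot all_order all_algebra.
From mathcomp Require Import reals.
Set Implicit Arguments. Unset Strict Implicit. Unset Printing Implicit Defensive.
Import Order.TTheory GRing.Theory Num.Theory.
Local Open Scope ring_scope.

Section Defs.
Variable R : realType.

(* ground set [3] = {1,2,3} is encoded as 'I_3 = {0,1,2}: element i is e i *)
Definition e1 : 'I_3 := @Ordinal 3 0 isT.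
Definition e2 : 'I_3 := @Ordinal 3 1 isT.
Definition e3 : 'I_3 := @Ordinal 3 2 isT.

Definition monotone (n : nat) (f : {set 'I_n} -> R) : Prop :=
  forall S T : {set 'I_n}, S \subset T -> f S <= f T.
Definition submodular (n : nat) (f : {set 'I_n} -> R) : Prop :=
  forall S T : {set 'I_n}, f (S :&: T) + f (S :|: T) <= f S + f T.

Definition inF (n : nat) (f : {set 'I_n} -> R) : Prop :=
  [/\ forall S, 0 <= f S, monotone f, submodular f,
      f set0 = 0 & f setT = 1].

Definition f1 (f : {set 'I_3} -> R) (i : 'I_3) : R := f [set i].
Definition f2 (f : {set 'I_3} -> R) (i j : 'I_3) : R := f [set i; j].
Definition fc (f : {set 'I_3} -> R) (i j : 'I_3) : R := f2 f i j - f1 f j.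

Definition inF3_1 (f : {set 'I_3} -> R) : Prop :=
  inF f /\ (fc f e3 e2 >= fc f e3 e1 /\ fc f e2 e3 >= fc f e2 e1).
Definition inF3_2 (f : {set 'I_3} -> R) : Prop :=
  inF f /\ (fc f e3 e1 >= fc f e3 e2 /\ fc f e1 e3 >= fc f e1 e2).
Definition inF3_3 (f : {set 'I_3} -> R) : Prop :=
  inF f /\ (fc f e2 e1 >= fc f e2 e3 /\ fc f e1 e2 >= fc f e1 e3).

Definition inS3 (k : nat) (f : {set 'I_3} -> R) : Prop :=
  match k with
  | 1 => inF3_1 f
  | 2 => inF3_2 f /\ ~ inF3_1 f
  | 3 => inF3_3 f /\ ~ inF3_1 f /\ ~ inF3_2 f
  | _ => False
  end.

(* concave closure: v is the maximum of sum_S theta(S) f(S) over feasible theta *)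
Definition feasible (n : nat) (x : 'I_n -> R) (theta : {set 'I_n} -> R) : Prop :=
  [/\ forall S, 0 <= theta S,
      \sum_(S : {set 'I_n}) theta S = 1 &
      forall i : 'I_n, \sum_(S : {set 'I_n} | i \in S) theta S = x i].

Definition objective (n : nat) (f : {set 'I_n} -> R) (theta : {set 'I_n} -> R) : R :=
  \sum_(S : {set 'I_n}) theta S * f S.

Definition concave_closure_eq (n : nat) (f : {set 'I_n} -> R) (x : 'I_n -> R) (v : R) : Prop :=
  (exists theta, feasible x theta /\ objective f theta = v) /\
  (forall theta, feasible x theta -> objective f theta <= v).

Definition lam (f : {set 'I_3} -> R) (i : nat) : R * R * R * R :=
  let a := f1 f e1 in let b := f1 f e2 in let c := f1 f e3 in
  let f12 := f2 f e1 e2 in let f13 := f2 f e1 e3 in let f23 := f2 f e2 e3 in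
  let g e e' := fc f e e' in
  match i with
  | 1 => (0, a, b, c)
  | 2 => (b - g e2 e3, a - b + g e2 e3, g e2 e3, g e3 e2)
  | 3 => (a - g e1 e3, g e1 e3, g e2 e3, g e3 e1)
  | 4 => (b - g e2 e1, g e1 e2, g e2 e1, g e3 e2)
  | 5 => (f23 - g e3 e1 - g e2 e1, g e2 e1 + f13 - f23, g e2 e1, g e3 e1)
  | 6 => (a - g e1 e3, g e1 e3, b - a + g e1 e3, g e3 e1)
  | 7 => (b - g e2 e3, g e1 e3, g e2 e3, g e3 e2)
  | 8 => (b - g e2 e1, g e1 e2, g e2 e1, g e3 e1)
  | 9 => (f13 - g e1 e2 - g e3 e2, g e1 e2, g e1 e2 + f23 - f13, g e3 e2)
  | 10 => (a - g e1 e2, g e1 e2, g e2 e1, c - b + g e2 e1)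
  | 11 => (b - g e2 e3, g e1 e2, g e2 e3, g e3 e2)
  | 12 => (c - g e3 e1, g e1 e3, g e2 e1, g e3 e1)
  | 13 => (f12 - g e1 e3 - g e2 e3, g e1 e3, g e2 e3, g e2 e3 + f13 - f12)
  | 14 => (f12 + f13 + f23 - 2, 1 - f23, 1 - f13, 1 - f12)
  | _ => (0, 0, 0, 0)
  end.

Definition aff (f : {set 'I_3} -> R) (i : nat) (x : 'I_3 -> R) : R :=
  let: (l0, l1, l2, l3) := lam f i in l0 + l1 * x e1 + l2 * x e2 + l3 * x e3.

End Defs.

(* Main.v *)
Require Import Defs.
From mathcomp Require Import all_boot all_order all_algebra.
From mathcomp Require Import reals ring lra.
Import Order.TTheory GRing.Theory Num.Theory.
Local Open Scope ring_scope.
Set Implicit Arguments. Unset Strict Implicit.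

Lemma ord3 (i : 'I_3) : i = e1 \/ i = e2 \/ i = e3.
Proof.
case: i => [[|[|[|m]]] Hm]; [left|right;left|right;right|by []]; exact: val_inj.
Qed.

Lemma set3_cases (P : {set 'I_3} -> Prop) :
  P set0 -> P [set e1] -> P [set e2] -> P [set e3] ->
  P [set e1; e2] -> P [set e1; e3] -> P [set e2; e3] -> P setT ->
  forall S, P S.
Proof.
move=> H0 H1 H2 H3 H12 H13 H23 HT S.
have E : forall A : {set 'I_3}, (forall i, (i \in S) = (i \in A)) -> S = A.
  by move=> A h; apply/setP => i; rewrite h.
case: (boolP (e1 \in S)) => a; case: (boolP (e2 \in S)) => b;
case: (boolP (e3 \in S)) => c;
[ have -> : S = setT | have -> : S = [set e1; e2] | have -> : S = [set e1; e3]
| have -> : S = [set e1] | have -> : S = [set e2; e3] | have -> : S = [set e2]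
| have -> : S = [set e3] | have -> : S = set0 ] => //;
  apply: E => i; case: (ord3 i) => [->|[->|->]]; rewrite !inE;
  by rewrite ?(negbTE a) ?(negbTE b) ?(negbTE c) ?a ?b ?c.
Qed.

Section G.
Variable R : realType.

Definition th4 (A1 A2 A3 A4 : {set 'I_3}) (w1 w2 w3 w4 : R) (S : {set 'I_3}) : R :=
  w1 * (S == A1)%:R + w2 * (S == A2)%:R + w3 * (S == A3)%:R + w4 * (S == A4)%:R.

Lemma sum1 (A : {set 'I_3}) (w : R) : \sum_(S : {set 'I_3}) w * (S == A)%:R = w.
Proof.
rewrite (bigD1 A) //= eqxx mulr1 big1 ?addr0 // => S /negbTE ->; by rewrite mulr0.
Qed.

Lemma sum1c (A : {set 'I_3}) (w : R) i :
  \sum_(S : {set 'I_3} | i \in S) w * (S == A)%:R = if i \in A then w else 0.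
Proof.
rewrite big_mkcond /= (bigD1 A) //= eqxx mulr1 big1 ?addr0.
  by case: (i \in A).
by move=> S /negbTE ->; rewrite mulr0; case: (i \in S).
Qed.

Lemma th4_feasible (x : 'I_3 -> R) (A1 A2 A3 A4 : {set 'I_3}) (w1 w2 w3 w4 : R) :
  0 <= w1 -> 0 <= w2 -> 0 <= w3 -> 0 <= w4 -> w1 + w2 + w3 + w4 = 1 ->
  (forall i, (if i \in A1 then w1 else 0) + (if i \in A2 then w2 else 0) +
     (if i \in A3 then w3 else 0) + (if i \in A4 then w4 else 0) = x i) ->
  feasible x (th4 A1 A2 A3 A4 w1 w2 w3 w4).
Proof.
move=> p1 p2 p3 p4 s hx; split.
- move=> S; rewrite /th4; do !apply: addr_ge0; apply: mulr_ge0 => //; apply: ler0n.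
- by rewrite /th4 !big_split /= !sum1.
- by move=> i; rewrite /th4 !big_split /= !sum1c.
Qed.

Lemma th4_obj (f : {set 'I_3} -> R) (A1 A2 A3 A4 : {set 'I_3}) (w1 w2 w3 w4 : R) :
  objective f (th4 A1 A2 A3 A4 w1 w2 w3 w4) =
  w1 * f A1 + w2 * f A2 + w3 * f A3 + w4 * f A4.
Proof.
rewrite /objective /th4.
under eq_bigr do rewrite !mulrDl.
rewrite !big_split /=.
have h : forall (A : {set 'I_3}) w, \sum_(S : {set 'I_3}) w * (S == A)%:R * f S = w * f A.
  move=> A w; rewrite (bigD1 A) //= eqxx mulr1 big1 ?addr0 // => S /negbTE ->.
  by rewrite mulr0 mul0r.
by rewrite !h.
Qed.

Definition dual (f : {set 'I_3} -> R) (i : nat) (S : {set 'I_3}) : R :=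
  let: (l0, l1, l2, l3) := lam f i in
  l0 + (if e1 \in S then l1 else 0) + (if e2 \in S then l2 else 0)
     + (if e3 \in S then l3 else 0).

Lemma ub (f : {set 'I_3} -> R) (x : 'I_3 -> R) i theta :
  (forall S, f S <= dual f i S) -> feasible x theta -> objective f theta <= aff f i x.
Proof.
rewrite /dual /aff; case: (lam f i) => [[[l0 l1] l2] l3] hd [t0 t1 tx].
rewrite /objective.
apply: le_trans (_ : \sum_(S : {set 'I_3}) theta S *
   (l0 + (if e1 \in S then l1 else 0) + (if e2 \in S then l2 else 0)
     + (if e3 \in S then l3 else 0)) <= _).
  by apply: ler_sum => S _; apply: ler_wpM2l.
rewrite le_eqVlt; apply/orP; left; apply/eqP.
under eq_bigr do rewrite !mulrDr.
rewrite !big_split /= -big_distrl /= t1 mul1r -!tx !big_mkcond /=.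
rewrite !big_distrr /= !big_mkcond /=.
congr (_ + _ + _ + _) => //; rewrite [RHS]big_mkcond; apply: eq_bigr => S _;
  by case: (_ \in S); rewrite ?mulr0 // mulrC.
Qed.
End G.

Lemma E21 : [set e2; e1] = [set e1; e2].
Proof. by apply/setP => i; rewrite !inE orbC. Qed.
Lemma E31 : [set e3; e1] = [set e1; e3].
Proof. by apply/setP => i; rewrite !inE orbC. Qed.
Lemma E32 : [set e3; e2] = [set e2; e3].
Proof. by apply/setP => i; rewrite !inE orbC. Qed.
Lemma n12 : (e1 == e2) = false. Proof. by []. Qed.
Lemma n13 : (e1 == e3) = false. Proof. by []. Qed.
Lemma n23 : (e2 == e3) = false. Proof. by []. Qed.
Lemma n21 : (e2 == e1) = false. Proof. by []. Qed.
Lemma n31 : (e3 == e1) = false. Proof. by []. Qed.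
Lemma n32 : (e3 == e2) = false. Proof. by []. Qed.

Lemma setP3 (A B : {set 'I_3}) : (e1 \in A) = (e1 \in B) ->
  (e2 \in A) = (e2 \in B) -> (e3 \in A) = (e3 \in B) -> A = B.
Proof. by move=> h1 h2 h3; apply/setP => i; case: (ord3 i) => [->|[->|->]]. Qed.
Ltac seteq := apply: setP3; rewrite !inE ?eqxx ?n12 ?n13 ?n23 ?n21 ?n31 ?n32.

Section M.
Variable R : realType.
Variable f : {set 'I_3} -> R.

Definition facts : Prop :=
  let a := f [set e1] in let b := f [set e2] in let c := f [set e3] in
  let p := f [set e1; e2] in let q := f [set e1; e3] in let r := f [set e2; e3] in
  [/\ f set0 = 0, f setT = 1, [/\ 0 <= a, 0 <= b & 0 <= c],
      [/\ [/\ a <= p, a <= q & b <= p], [/\ b <= r, c <= q & c <= r] &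
      [/\ p <= 1, q <= 1 & r <= 1]] &
      [/\ [/\ p <= a + b, q <= a + c & r <= b + c] &
      [/\ 1 + a <= p + q, 1 + b <= p + r & 1 + c <= q + r]]].

Lemma get_facts : inF f -> facts.
Proof.
case=> h0 hm hs hz hT.
have M : forall S T : {set 'I_3}, S \subset T -> f S <= f T by [].
have Sm : forall S T U V : {set 'I_3}, S :&: T = U -> S :|: T = V -> f U + f V <= f S + f T.
  by move=> S T U V <- <-.
split => //.
- split; [split|split|split]; try (apply: M; apply/subsetP => i; rewrite !inE => /eqP ->;
  by rewrite ?eqxx ?orbT).
  1-3: by apply: le_trans (M _ _ (subsetT _)) _; rewrite hT.
- split; split.
  1-3: by rewrite -[X in X <= _]add0r -hz; apply: Sm; seteq.
  all: by rewrite -hT addrC; apply: Sm; seteq.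
Qed.
End M.

Section D.
Variable R : realType.
Variable f : {set 'I_3} -> R.

Ltac dualtac := apply: set3_cases; rewrite /dual /lam /fc /f1 /f2 /= ?E21 ?E31 ?E32 !inE ?eqxx ?n12 ?n13 ?n23 ?n21 ?n31 ?n32 /=; lra.

Ltac getf H := case: H => [h0 hT [n1 n2 n3] [[m1 m2 m3] [m4 m5 m6] [u1 u2 u3]] [[s1 s2 s3] [t1 t2 t3]]].

Definition c1 := fc f e3 e2 >= fc f e3 e1 /\ fc f e2 e3 >= fc f e2 e1.
Definition c2 := fc f e3 e1 >= fc f e3 e2 /\ fc f e1 e3 >= fc f e1 e2.
Definition c3 := fc f e2 e1 >= fc f e2 e3 /\ fc f e1 e2 >= fc f e1 e3.

Ltac getc H := case: H; rewrite /fc /f1 /f2 ?E21 ?E31 ?E32 => k1 k2.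

Lemma d1 : facts f -> forall S, f S <= dual f 1 S.
Proof. move=> H; getf H; dualtac. Qed.
Lemma d14 : facts f -> forall S, f S <= dual f 14 S.
Proof. move=> H; getf H; dualtac. Qed.
Lemma d2 : facts f -> c1 -> forall S, f S <= dual f 2 S.
Proof. move=> H C; getf H; getc C; dualtac. Qed.
Lemma d3 : facts f -> c1 -> forall S, f S <= dual f 3 S.
Proof. move=> H C; getf H; getc C; dualtac. Qed.
Lemma d4 : facts f -> c1 -> forall S, f S <= dual f 4 S.
Proof. move=> H C; getf H; getc C; dualtac. Qed.
Lemma d5 : facts f -> c1 -> forall S, f S <= dual f 5 S.
Proof. move=> H C; getf H; getc C; dualtac. Qed.
Lemma d6 : facts f -> c2 -> forall S, f S <= dual f 6 S.
Proof. move=> H C; getf H; getc C; dualtac. Qed.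
Lemma d7 : facts f -> c2 -> forall S, f S <= dual f 7 S.
Proof. move=> H C; getf H; getc C; dualtac. Qed.
Lemma d8 : facts f -> c2 -> forall S, f S <= dual f 8 S.
Proof. move=> H C; getf H; getc C; dualtac. Qed.
Lemma d9 : facts f -> c2 -> forall S, f S <= dual f 9 S.
Proof. move=> H C; getf H; getc C; dualtac. Qed.
Lemma d10 : facts f -> c3 -> forall S, f S <= dual f 10 S.
Proof. move=> H C; getf H; getc C; dualtac. Qed.
Lemma d11 : facts f -> c3 -> forall S, f S <= dual f 11 S.
Proof. move=> H C; getf H; getc C; dualtac. Qed.
Lemma d12 : facts f -> c3 -> forall S, f S <= dual f 12 S.
Proof. move=> H C; getf H; getc C; dualtac. Qed.
Lemma d13 : facts f -> c3 -> forall S, f S <= dual f 13 S.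
Proof. move=> H C; getf H; getc C; dualtac. Qed.
End D.

Section A.
Variable R : realType.
Variable f : {set 'I_3} -> R.
Variable x : 'I_3 -> R.

Lemma forall3 (P : 'I_3 -> Prop) : P e1 -> P e2 -> P e3 -> forall j, P j.
Proof. by move=> h1 h2 h3 j; case: (ord3 j) => [->|[->|->]]. Qed.

Definition mn (i2 i3 i4 i5 : nat) : R :=
    (Num.min
       (Num.min (Num.min (aff f i2 x) (aff f i3 x))
                (Num.min (aff f i4 x) (aff f i5 x)))
       (Num.min (aff f 1 x) (aff f 14 x))).

Lemma pick_lemma (m : R) th : feasible x th ->
  (forall th, feasible x th -> objective f th <= m) -> m <= objective f th ->
  exists th, feasible x th /\ objective f th = m.
Proof.
move=> F U h; exists th; split => //; apply/le_anti/andP; split => //; exact: U.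
Qed.

Ltac finish_obj hz hT i :=
  apply: le_trans (_ : _ <= aff f i x) _;
  [ by rewrite !ge_min lexx ?orbT
  | rewrite /aff /lam /fc /f1 /f2 /= ?E21 ?E31 ?E32 ?hz ?hT;
    rewrite le_eqVlt; apply/orP; left; apply/eqP; ring ].

Ltac pick UB hz hT i2 A1 A2 A3 A4 w1 w2 w3 w4 :=
  apply: (pick_lemma (th := th4 A1 A2 A3 A4 w1 w2 w3 w4) _ UB);
  [ apply: th4_feasible; try lra;
     apply: forall3;
     rewrite !inE ?eqxx ?n12 ?n13 ?n23 ?n21 ?n31 ?n32 /=; lra
  | rewrite th4_obj;
  finish_obj hz hT i2 ].

Ltac regions UB hz hT i2 i3 i4 i5 a b c Sab Sac Sbc :=
  have [hs1|hs1] := lerP (x e1 + x e2 + x e3) 1;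
  [ pick UB hz hT 1%N (set0 : {set 'I_3}) [set e1] [set e2] [set e3]
    (1 - (x e1 + x e2 + x e3)) (x e1) (x e2) (x e3) |];
  have [hs2|hs2] := lerP 2 (x e1 + x e2 + x e3);
  [ pick UB hz hT 14%N [set e1; e2] [set e1; e3] [set e2; e3] (setT : {set 'I_3})
    (1 - x e3) (1 - x e2) (1 - x e1) (x e1 + x e2 + x e3 - 2) |];
  have [hab|hab] := lerP (x a + x b) 1; have [hac|hac] := lerP (x a + x c) 1;
  [ pick UB hz hT i2 [set a] [set b] [set c] Sbc
      (x a) (1 - x a - x c) (1 - x a - x b) (x e1 + x e2 + x e3 - 1)
  | pick UB hz hT i3 [set a] [set c] Sac Sbc
      (1 - x c) (1 - x a - x b) (x a + x c - 1) (x b)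
  | pick UB hz hT i4 [set a] [set b] Sab Sbc
      (1 - x b) (1 - x a - x c) (x a + x b - 1) (x c)
  | pick UB hz hT i5 [set a] Sab Sac Sbc
      (2 - (x e1 + x e2 + x e3)) (x a + x b - 1) (x a + x c - 1) (1 - x a) ].


Lemma attain1 : f set0 = 0 -> f setT = 1 -> (forall i, 0 <= x i <= 1) ->
  (forall th, feasible x th -> objective f th <= mn 2 3 4 5) ->
  exists th, feasible x th /\ objective f th = mn 2 3 4 5.
Proof.
move=> hz hT hx UB;
  have := hx e1; have := hx e2; have := hx e3;
  case/andP => ? ?; case/andP => ? ?; case/andP => ? ?;
  rewrite /mn in UB *.
regions UB hz hT 2%N 3%N 4%N 5%N e1 e2 e3 [set e1; e2] [set e1; e3] [set e2; e3].
Qed.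

Lemma attain2 : f set0 = 0 -> f setT = 1 -> (forall i, 0 <= x i <= 1) ->
  (forall th, feasible x th -> objective f th <= mn 6 7 8 9) ->
  exists th, feasible x th /\ objective f th = mn 6 7 8 9.
Proof.
move=> hz hT hx UB;
  have := hx e1; have := hx e2; have := hx e3;
  case/andP => ? ?; case/andP => ? ?; case/andP => ? ?;
  rewrite /mn in UB *.
regions UB hz hT 6%N 7%N 8%N 9%N e2 e1 e3 [set e1; e2] [set e2; e3] [set e1; e3].
Qed.

Lemma attain3 : f set0 = 0 -> f setT = 1 -> (forall i, 0 <= x i <= 1) ->
  (forall th, feasible x th -> objective f th <= mn 10 11 12 13) ->
  exists th, feasible x th /\ objective f th = mn 10 11 12 13.
Proof.
move=> hz hT hx UB;
  have := hx e1; have := hx e2; have := hx e3;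
  case/andP => ? ?; case/andP => ? ?; case/andP => ? ?;
  rewrite /mn in UB *.
regions UB hz hT 10%N 11%N 12%N 13%N e3 e1 e2 [set e1; e3] [set e2; e3] [set e1; e2].
Qed.
End A.

Lemma finish (R : realType) (f : {set 'I_3} -> R) (x : 'I_3 -> R) (i2 i3 i4 i5 : nat) :
  facts f ->
  (forall S, f S <= dual f i2 S) -> (forall S, f S <= dual f i3 S) ->
  (forall S, f S <= dual f i4 S) -> (forall S, f S <= dual f i5 S) ->
  ((forall th, feasible x th -> objective f th <= mn f x i2 i3 i4 i5) ->
    exists th, feasible x th /\ objective f th = mn f x i2 i3 i4 i5) ->
  concave_closure_eq f x (mn f x i2 i3 i4 i5).
Proof.
move=> H D2 D3 D4 D5 At.
have UB : forall th, feasible x th -> objective f th <= mn f x i2 i3 i4 i5.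
  move=> th hth; rewrite /mn !le_min (ub D2 hth) (ub D3 hth) (ub D4 hth) (ub D5 hth).
  by rewrite (ub (d1 H) hth) (ub (d14 H) hth).
by split => //; apply: At.
Qed.

Unset Implicit Arguments.
Theorem mainTheorem5 (R : realType) (f : {set 'I_3} -> R) (x : 'I_3 -> R)
  (k : nat) :
  inF f ->
  (forall i, 0 <= x i <= 1) ->
  (1 <= k <= 3)%N ->
  inS3 k f ->
  concave_closure_eq f x
    (Num.min
       (Num.min (Num.min (aff f (4 * k - 2) x) (aff f (4 * k - 1) x))
                (Num.min (aff f (4 * k) x) (aff f (4 * k + 1) x)))
       (Num.min (aff f 1 x) (aff f 14 x))).
Proof.
move=> hF hx hk hS.
have H := get_facts hF.
have hz : f set0 = 0 by case: hF.
have hT : f setT = 1 by case: hF.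
case: k hk hS => [|[|[|[|k]]]] // _ hS.
- have C : c1 f := hS.2.
  change (concave_closure_eq f x (mn f x 2 3 4 5)).
  apply: finish => //; [exact: d2|exact: d3|exact: d4|exact: d5|exact: attain1].
- have C : c2 f := hS.1.2.
  change (concave_closure_eq f x (mn f x 6 7 8 9)).
  apply: finish => //; [exact: d6|exact: d7|exact: d8|exact: d9|exact: attain2].
- have C : c3 f := hS.1.2.
  change (concave_closure_eq f x (mn f x 10 11 12 13)).
  apply: finish => //; [exact: d10|exact: d11|exact: d12|exact: d13|exact: attain3].
Qed.
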